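(* Let $p\equiv 3\pmod 4$ be a prime. Then $$\prod_{1\le i<j\le \frac{p-1}{2}}(j^2-i^2)\equiv 1\pmod p.$$ *)

(* Defs.v *)
From mathcomp Require Import all_boot.

(* Main.v *)
Require Import Defs.
From mathcomp Require Import all_boot all_algebra.
From mathcomp Require Import zify ring.
Import GRing.Theory.

Lemma prod_sub m : \prod_(1 <= i < m) (m - i) = m.-1`!.
Proof.
case: m => [|k]; first by rewrite big_geq.
rewrite big_nat_rev /= fact_prod.
apply: eq_big_nat => i /andP [h1 h2]; lia.
Qed.

Lemma prod_add m : \prod_(1 <= i < m) (m + i) * m`! = (2 * m).-1`!.
Proof.
case: m => [|k]; first by rewrite big_geq.
have -> : (2 * k.+1).-1 = (2 * k).+1 by lia.
have E : ((2 * k).+1)`! = \prod_(1 <= i < (2 * k).+2) i by rewrite fact_prod.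
rewrite E (big_cat_nat (n := k.+2) (p := (2 * k).+2)) /=; try lia.
rewrite -fact_prod mulnC; congr (_ * _).
have -> : k.+2 = 1 + k.+1 by lia.
rewrite big_addn.
have -> : (2 * k).+2 - k.+1 = k.+1 by lia.
by apply: eq_bigr => i _; rewrite addnC.
Qed.

Lemma Q_eq m : 0 < m -> \prod_(1 <= i < m) (m ^ 2 - i ^ 2) * m = (2 * m).-1`!.
Proof.
case: m => [//|k] _.
rewrite (eq_bigr (fun i => (k.+1 - i) * (k.+1 + i))); last by move=> i _; rewrite subn_sqr.
rewrite -prod_add big_split prod_sub factS /=.
by rewrite [k`! * _]mulnC -mulnA [k`! * _]mulnC.
Qed.

Lemma key n : \prod_(1 <= j < n.+1) \prod_(1 <= i < j) (j ^ 2 - i ^ 2) * n`!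
  = \prod_(1 <= j < n.+1) (2 * j).-1`!.
Proof.
elim: n => [|n IH]; first by rewrite !big_geq.
rewrite big_nat_recr // [in RHS]big_nat_recr // -IH factS -Q_eq //.
rewrite /=.
set A := \prod_(1 <= j < n.+1) _; set B := \prod_(1 <= i < n.+1) _.
rewrite -!mulnA; congr (_ * _); lia.
Qed.

Local Open Scope nat_scope.

Lemma wil p (hp : prime p) k : k < p ->
  ((k`!)%:R * ((p.-1 - k)`!)%:R : 'F_p)%R = ((-1) ^+ k.+1)%R.
Proof.
elim: k => [_|k IH hk].
- rewrite fact0 mul1r subn0 expr1.
  have := Wilson (prime_gt1 hp); rewrite hp => /esym hw.
  have : ((((p.-1)`!.+1)%:R)%R : 'F_p) = 0%R.
    by rewrite -Fp_nat_mod // (eqP hw).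
  by rewrite -natr1 => /eqP; rewrite addr_eq0 => /eqP.
- set a := p.-1 - k.+1.
  have ha : p.-1 - k = a.+1 by rewrite /a; lia.
  have hsum : (((a.+1)%:R)%R : 'F_p) = (- (k.+1)%:R)%R.
    apply/eqP; rewrite -addr_eq0 -natrD.
    have -> : (a.+1 + k.+1)%N = p by rewrite /a; have := prime_gt1 hp; lia.
    by rewrite pchar_Fp_0.
  have := IH (ltnW hk); rewrite ha !factS !natrM hsum => H; rewrite exprS -H.
  ring.
Qed.

Lemma mid p (hp : prime p) q (hq : p = q * 4 + 3) t : t <= q ->
  (\prod_((q - t).+1 <= j < q + 2 + t) ((((2 * j).-1)`!)%:R : 'F_p))%R
  = (((2 * q).+1)`!)%:R%R.
Proof.
elim: t => [_|t IH ht].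
- rewrite subn0 (_ : q + 2 + 0 = q.+2); last by lia.
  rewrite big_nat1; congr (_`!%:R)%R; lia.
- rewrite big_ltn; last by lia.
  rewrite (_ : (q - t.+1).+2 = (q - t).+1); last by lia.
  rewrite (_ : q + 2 + t.+1 = (q + 2 + t).+1); last by lia.
  rewrite big_nat_recr; last by lia.
  rewrite IH; last by lia.
  have Hw := @wil p hp ((2 * (q - t.+1).+1).-1) (ltac:(lia)).
  rewrite (_ : p.-1 - _ = (2 * (q + 2 + t)).-1) in Hw; last by lia.
  rewrite (_ : ((2 * (q - t.+1).+1).-1).+1 = 2 * (q - t)) in Hw; last by lia.
  rewrite exprM (_ : ((-1) ^+ 2 = 1 :> 'F_p)%R) ?expr1n in Hw; last by rewrite expr2 mulrNN mulr1.
  by rewrite mulrCA mulrA -mulrA Hw mulr1.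
Qed.

Theorem mainTheorem6 (p : nat) (hp : prime p) (h3 : p %% 4 = 3) :
  \prod_(1 <= j < (p.-1)./2.+1) \prod_(1 <= i < j) (j ^ 2 - i ^ 2) = 1 %[mod p].
Proof.
have hpq : p = (p %/ 4) * 4 + 3 by rewrite {1}(divn_eq p 4) h3.
set q := p %/ 4 in hpq.
have -> : (p.-1)./2 = (2 * q).+1.
  rewrite {1}hpq (_ : (q * 4 + 3).-1 = ((2 * q).+1).*2) ?doubleK //.
  rewrite -muln2; lia.
set n := (2 * q).+1.
set P := \prod_(1 <= j < n.+1) _.
have hF : (((n`!)%:R)%R : 'F_p) != 0%R.
  apply/eqP => h0; have := @wil p hp n (ltac:(rewrite /n; lia)).
  by rewrite h0 mul0r => /eqP; rewrite eq_sym signr_eq0.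
have H : ((P%:R)%R : 'F_p) = (1%:R)%R.
  apply: (mulIf hF); rewrite /= mulr1n mul1r.
  have K := congr1 (fun x => ((x%:R)%R : 'F_p)) (key n).
  rewrite /= natrM in K; rewrite K natr_prod.
  have := @mid p hp q hpq q (leqnn q).
  by rewrite subnn (_ : q + 2 + q = n.+1) //; rewrite /n; lia.
have := congr1 (fun x : 'F_p => nat_of_ord x) H; rewrite /= (val_Fp_nat hp P) => ->. by rewrite Fp_cast.
Qed.
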